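(* LFI3 is maximal with respect to LFI1; that is, LFI3 is a proper sublogic of LFI1, and for every formula $\alpha$ such that $\vDash_{LFI1}\alpha$ but $\not\vDash_{LFI3}\alpha$, the logic obtained from LFI3 by adding $\alpha$ as a theorem schema (all of its substitution instances as theorems) coincides with LFI1.
   Context: Formulas are built from a countable set of propositional variables using unary $\neg,\circ$ and binary $\land,\lor,\to$. On $\{0,1\}$ use Boolean $\land,\lor,\to,\sim$. Let $\mathbb{B}=\{x\in\{0,1\}^3: x_1\lor x_2=1,\ x_3\lor\sim(x_1\land x_2)=1\}=\{T,t,b,f,F\}$ with $T=(1,0,0)$, $t=(1,0,1)$, $b=(1,1,1)$, $f=(0,1,1)$, $F=(0,1,0)$. The LFI3 algebra on $\mathbb{B}$ has operations: $a\dot\land b=(a_1\land b_1,\ a_2\lor b_2,\ (\sim a_2\land b_3)\lor(a_3\land\sim b_2)\lor(a_3\land b_3))$; $a\dot\lor b=(a_1\lor b_1,\ a_2\land b_2,\ (\sim a_1\land b_3)\lor(a_3\land\sim b_1)\lor(a_3\land b_3))$; $a\dot\to b=(a_1\to b_1,\ b_2\land(\sim a_2\lor a_3),\ (\sim a_2\land b_3)\lor(\sim a_2\land a_3\land\sim b_1)\lor(a_3\land b_3)\lor(\sim a_1\land a_3\land\sim b_1))$; $\dot\neg a=(a_2,a_1,a_3)$; $\dot\circ a=(\sim(a_1\land a_2),a_3,a_3\land\sim(a_1\land a_2))$. Designated set $D=\{T,t,b\}$; LFI3 is the matrix logic of this algebra with $D$. LFI1 is the three-valued matrix logic on $\{1,\frac12,0\}$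 with designated set $\{1,\frac12\}$, $\land=\min$, $\lor=\max$ (order $0<\frac12<1$), $a\to c=1$ if $a=0$ and $a\to c=c$ otherwise, $\neg1=0$, $\neg\frac12=\frac12$, $\neg0=1$, $\circ1=\circ0=1$, $\circ\frac12=0$. For matrix logics, $\Gamma\vDash\alpha$ means every homomorphic valuation designating all of $\Gamma$ designates $\alpha$; ''sublogic'' means inclusion of consequence relations. *)

(* Defs.v *)
From Stdlib Require Import Bool.

Inductive form : Type :=
| Var : nat -> form
| Neg : form -> form
| Circ : form -> form
| And : form -> form -> form
| Or : form -> form -> form
| Imp : form -> form -> form.

Fixpoint subst (s : nat -> form) (a : form) : form :=
  match a with
  | Var p => s p
  | Neg a => Neg (subst s a)
  | Circ a => Circ (subst s a)
  | And a b => And (subst s a) (subst s b)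
  | Or a b => Or (subst s a) (subst s b)
  | Imp a b => Imp (subst s a) (subst s b)
  end.

Definition triple := (bool * bool * bool)%type.
Definition p1 (x : triple) : bool := fst (fst x).
Definition p2 (x : triple) : bool := snd (fst x).
Definition p3 (x : triple) : bool := snd x.
Definition mk (a b c : bool) : triple := (a, b, c).

Definition inB (x : triple) : bool :=
  (p1 x || p2 x) && (p3 x || negb (p1 x && p2 x)).

Definition vT : triple := mk true false false.
Definition vt : triple := mk true false true.
Definition vb : triple := mk true true true.
Definition vf : triple := mk false true true.
Definition vF : triple := mk false true false.

Definition impb (a b : bool) : bool := negb a || b.

Definition andB (a b : triple) : triple :=
  mk (p1 a && p1 b) (p2 a || p2 b)
     ((negb (p2 a) && p3 b) || (p3 a && negb (p2 b)) || (p3 a && p3 b)).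
Definition orB (a b : triple) : triple :=
  mk (p1 a || p1 b) (p2 a && p2 b)
     ((negb (p1 a) && p3 b) || (p3 a && negb (p1 b)) || (p3 a && p3 b)).
Definition impB (a b : triple) : triple :=
  mk (impb (p1 a) (p1 b)) (p2 b && (negb (p2 a) || p3 a))
     ((negb (p2 a) && p3 b) || (negb (p2 a) && p3 a && negb (p1 b))
      || (p3 a && p3 b) || (negb (p1 a) && p3 a && negb (p1 b))).
Definition negB (a : triple) : triple := mk (p2 a) (p1 a) (p3 a).
Definition circB (a : triple) : triple :=
  mk (negb (p1 a && p2 a)) (p3 a) (p3 a && negb (p1 a && p2 a)).

Definition triple_eqb (x y : triple) : bool :=
  Bool.eqb (p1 x) (p1 y) && Bool.eqb (p2 x) (p2 y) && Bool.eqb (p3 x) (p3 y).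

Definition desB (x : triple) : bool :=
  triple_eqb x vT || triple_eqb x vt || triple_eqb x vb.

(* Homomorphic extension of a valuation of the variables into B
   (B is closed under the operations, so this is the homomorphism into B). *)
Fixpoint evalB (v : nat -> triple) (a : form) : triple :=
  match a with
  | Var p => v p
  | Neg a => negB (evalB v a)
  | Circ a => circB (evalB v a)
  | And a b => andB (evalB v a) (evalB v b)
  | Or a b => orB (evalB v a) (evalB v b)
  | Imp a b => impB (evalB v a) (evalB v b)
  end.

Definition cons3 (Gamma : form -> Prop) (a : form) : Prop :=
  forall v : nat -> triple, (forall p, inB (v p) = true) ->
    (forall g, Gamma g -> desB (evalB v g) = true) ->
    desB (evalB v a) = true.

Inductive V3 : Type := one | half | zero.

Definition rank3 (x : V3) : nat := match x with zero => 0 | half => 1 | one => 2 end.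
Definition min3 (x y : V3) : V3 := if Nat.leb (rank3 x) (rank3 y) then x else y.
Definition max3 (x y : V3) : V3 := if Nat.leb (rank3 x) (rank3 y) then y else x.
Definition imp3 (x y : V3) : V3 := match x with zero => one | _ => y end.
Definition neg3 (x : V3) : V3 := match x with one => zero | half => half | zero => one end.
Definition circ3 (x : V3) : V3 := match x with half => zero | _ => one end.
Definition des3 (x : V3) : bool := match x with zero => false | _ => true end.

Fixpoint eval3 (v : nat -> V3) (a : form) : V3 :=
  match a with
  | Var p => v p
  | Neg a => neg3 (eval3 v a)
  | Circ a => circ3 (eval3 v a)
  | And a b => min3 (eval3 v a) (eval3 v b)
  | Or a b => max3 (eval3 v a) (eval3 v b)
  | Imp a b => imp3 (eval3 v a) (eval3 v b)
  end.

Definition cons1 (Gamma : form -> Prop) (a : form) : Prop :=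
  forall v : nat -> V3,
    (forall g, Gamma g -> des3 (eval3 v g) = true) ->
    des3 (eval3 v a) = true.

Definition noprem : form -> Prop := fun _ => False.

Definition sublogic31 : Prop :=
  forall Gamma a, cons3 Gamma a -> cons1 Gamma a.

Definition cons3_plus (alpha : form) (Gamma : form -> Prop) (b : form) : Prop :=
  cons3 (fun g => Gamma g \/ exists s : nat -> form, g = subst s alpha) b.

(* Main.v *)
Require Import Defs.
From Stdlib Require Import Bool Classical.

Definition h (x : V3) : triple := match x with one => vT | half => vb | zero => vF end.

Lemma h_neg x : negB (h x) = h (neg3 x). Proof. destruct x; reflexivity. Qed.
Lemma h_circ x : circB (h x) = h (circ3 x). Proof. destruct x; reflexivity. Qed.
Lemma h_and x y : andB (h x) (h y) = h (min3 x y). Proof. destruct x, y; reflexivity. Qed.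
Lemma h_or x y : orB (h x) (h y) = h (max3 x y). Proof. destruct x, y; reflexivity. Qed.
Lemma h_imp x y : impB (h x) (h y) = h (imp3 x y). Proof. destruct x, y; reflexivity. Qed.
Lemma h_des x : desB (h x) = des3 x. Proof. destruct x; reflexivity. Qed.
Lemma h_inB x : inB (h x) = true. Proof. destruct x; reflexivity. Qed.

Lemma evalB_h u a : evalB (fun p => h (u p)) a = h (eval3 u a).
Proof.
  induction a; simpl; try rewrite IHa; try rewrite IHa1, IHa2;
  auto using h_neg, h_circ, h_and, h_or, h_imp.
Qed.

Lemma evalB_ext v w a : (forall p, v p = w p) -> evalB v a = evalB w a.
Proof. intro H; induction a; simpl; congruence. Qed.

Lemma evalB_subst v s a : evalB v (subst s a) = evalB (fun p => evalB v (s p)) a.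
Proof. induction a; simpl; congruence. Qed.

Lemma eval3_subst v s a : eval3 v (subst s a) = eval3 (fun p => eval3 v (s p)) a.
Proof. induction a; simpl; congruence. Qed.

Definition term (x : triple) (q : form) : form :=
  match x with
  | (true, false, false) => Neg (Circ (Circ q))
  | (true, false, true) => q
  | (true, true, true) => Circ q
  | (false, true, true) => Neg q
  | _ => Circ (Circ q)
  end.

Lemma term_ok v q x : evalB v q = vt -> inB x = true -> evalB v (term x q) = x.
Proof.
  intros Hq Hx. destruct x as [[a b] c]; destruct a, b, c; simpl in Hx; try discriminate;
  simpl; rewrite Hq; reflexivity.
Qed.

Definition back (x : triple) : V3 :=
  match x with
  | (true, false, false) => one
  | (true, true, true) => half
  | _ => zero
  end.

Lemma back_ok x : inB x = true -> x <> vt -> x <> vf -> h (back x) = x.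
Proof.
  intros Hx H1 H2. destruct x as [[a b] c]; destruct a, b, c; simpl in Hx; try discriminate;
  try reflexivity; exfalso; [apply H1 | apply H2]; reflexivity.
Qed.

Lemma sub31 : sublogic31.
Proof.
  intros G a H3 u HG.
  rewrite <- h_des, <- evalB_h. apply H3.
  - intro p; apply h_inB.
  - intros g Hg. rewrite evalB_h, h_des. auto.
Qed.

Theorem theorem14 :
  (sublogic31 /\ (exists (Gamma : form -> Prop) (a : form), cons1 Gamma a /\ ~ cons3 Gamma a))
  /\
  (forall alpha : form,
     cons1 noprem alpha -> ~ cons3 noprem alpha ->
     forall (Gamma : form -> Prop) (b : form),
       cons3_plus alpha Gamma b <-> cons1 Gamma b).
Proof.
  split; [split; [exact sub31|] |].
  - exists noprem, (Circ (Circ (Var 0))). split.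
    + intros u _. simpl. destruct (u 0); reflexivity.
    + intro H. specialize (H (fun _ => vt) (fun _ => eq_refl) (fun g f => False_ind _ f)).
      simpl in H. discriminate.
  - intros alpha H1 H3 G b. split.
    + intros Hp u HG.
      rewrite <- h_des, <- evalB_h. apply Hp.
      * intro p; apply h_inB.
      * intros g [Hg | [s ->]].
        -- rewrite evalB_h, h_des. auto.
        -- rewrite evalB_h, h_des, eval3_subst. apply H1. intros _ [].
    + intros H v Hin HG.
      destruct (classic (exists q, evalB v q = vt)) as [[q Hq] | Hno].
      * exfalso. apply H3. intros w Hw _.
        assert (E := HG (subst (fun p => term (w p) q) alpha) (or_intror (ex_intro _ _ eq_refl))).
        rewrite evalB_subst in E.
        rewrite <- E. f_equal. apply evalB_ext. intro p. symmetry. apply term_ok; auto.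
      * assert (Hv : forall p, h (back (v p)) = v p).
        { intro p. apply back_ok; auto.
          - intro E. apply Hno. exists (Var p). exact E.
          - intro E. apply Hno. exists (Neg (Var p)). simpl. rewrite E. reflexivity. }
        rewrite (evalB_ext v (fun p => h (back (v p)))) by (intro; symmetry; auto).
        rewrite evalB_h, h_des. apply H. intros g Hg.
        rewrite <- h_des, <- evalB_h.
        rewrite (evalB_ext _ v) by auto. apply HG. left; exact Hg.
Qed.
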